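(* Let $n\geq 3$, $d\geq 2$ and $\ell\in\textup{int}(C_n)$. Then $V_d(\ell)$ contains $k$-dimensional polygons for every $k\in\{2,\ldots,\min\{d,n-1\}\}$.
   Context: $C_n$ is the set of $\ell=(l_1,\ldots,l_n)\in\mathbb{R}^n$ with $l_i>0$ and $l_i\leq\sum_{j\neq i}l_j$ for all $i$; $\textup{int}(C_n)$ is its interior (all these inequalities strict). $V_d(\ell)=\{(\mathbf{v}_1,\ldots,\mathbf{v}_{n-1})\in(\mathbb{R}^d)^{n-1} : \|\mathbf{v}_i-\mathbf{v}_{i-1}\|=l_i,\ i=1,\ldots,n\}$ with $\mathbf{v}_0=\mathbf{v}_n=\mathbf{0}$. The dimension of $P=(\mathbf{v}_1,\ldots,\mathbf{v}_{n-1})$ is the dimension of the linear span of its vertices $\mathbf{v}_1,\ldots,\mathbf{v}_{n-1}$. *)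

(* Defs.v *)
From HB Require Import structures.
From mathcomp Require Import all_boot all_order all_algebra.
From mathcomp Require Import reals.
Set Implicit Arguments. Unset Strict Implicit. Unset Printing Implicit Defensive.
Import Order.TTheory GRing.Theory Num.Theory.
Local Open Scope ring_scope.

Definition enorm (R : realType) (d : nat) (v : 'rV[R]_d) : R :=
  Num.sqrt (\sum_(j < d) v 0 j ^+ 2).

(* Side lengths l_1..l_n are stored as l : 'I_n -> R with l_{i+1} = l i. *)
Definition in_Cn (R : realType) (n : nat) (l : 'I_n -> R) : Prop :=
  forall i : 'I_n, 0 < l i /\ l i <= \sum_(j < n | j != i) l j.
Definition in_int_Cn (R : realType) (n : nat) (l : 'I_n -> R) : Prop :=
  forall i : 'I_n, 0 < l i /\ l i < \sum_(j < n | j != i) l j.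

(* A polygon P = (v_1,...,v_{n-1}) is a matrix with n-1 rows: row k is v_{k+1}.
   vtx P i is v_i for 0 <= i <= n, with v_0 = v_n = 0. *)
Definition vtx (R : realType) (n d : nat) (P : 'M[R]_(n.-1, d)) (i : nat)
  : 'rV[R]_d :=
  match insub i.-1 with
  | Some k => if i == 0%N then 0 else row k P
  | None => 0
  end.

Definition in_Vd (R : realType) (n d : nat) (l : 'I_n -> R)
  (P : 'M[R]_(n.-1, d)) : Prop :=
  forall i : 'I_n, enorm (vtx P i.+1 - vtx P i) = l i.

(* Dimension of P = dimension of the linear span of v_1..v_{n-1}
   = rank of the matrix whose rows are these vertices. *)
Definition poly_dim (R : realType) (n d : nat) (P : 'M[R]_(n.-1, d)) : nat :=
  \rank P.

(* Main.v *)
Require Import Defs.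
From mathcomp Require Import all_boot all_order all_algebra.
From mathcomp Require Import reals.
From mathcomp Require Import ring lra zify.
Set Implicit Arguments. Unset Strict Implicit. Unset Printing Implicit Defensive.
Import Order.TTheory GRing.Theory Num.Theory.
Local Open Scope ring_scope.

Section S.
Variable R : realType.
Variable d : nat.
Implicit Types (u v w x e : 'rV[R]_d).

Definition dot u v : R := \sum_(j < d) u 0 j * v 0 j.

Lemma dotC u v : dot u v = dot v u.
Proof. by apply: eq_bigr => j _; rewrite mulrC. Qed.

Lemma dotDl u v x : dot (u + v) x = dot u x + dot v x.
Proof. by rewrite /dot -big_split; apply: eq_bigr => j _; rewrite mxE mulrDl. Qed.

Lemma dotZl a u x : dot (a *: u) x = a * dot u x.
Proof. by rewrite /dot mulr_sumr; apply: eq_bigr => j _; rewrite mxE mulrA. Qed.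

Lemma dotNl u x : dot (- u) x = - dot u x.
Proof. by rewrite -scaleN1r dotZl mulN1r. Qed.

Lemma dotBl u v x : dot (u - v) x = dot u x - dot v x.
Proof. by rewrite dotDl dotNl. Qed.

Lemma dotDr u v x : dot x (u + v) = dot x u + dot x v.
Proof. by rewrite dotC dotDl !(dotC x). Qed.
Lemma dotZr a u x : dot x (a *: u) = a * dot x u.
Proof. by rewrite dotC dotZl dotC. Qed.
Lemma dotBr u v x : dot x (u - v) = dot x u - dot x v.
Proof. by rewrite dotC dotBl !(dotC x). Qed.

Lemma dot_delta (j : 'I_d) v : dot (delta_mx 0 j) v = v 0 j.
Proof.
rewrite /dot (bigD1 j) //= mxE !eqxx mul1r big1 ?addr0 // => i hi.
rewrite mxE eqxx /=; case: eqP hi => [-> /eqP //|_ _]; by rewrite mul0r.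
Qed.

Lemma enorm_dot v (L : R) : 0 <= L -> dot v v = L ^+ 2 -> enorm v = L.
Proof.
move=> L0 h; rewrite /enorm.
have -> : \sum_(j < d) v 0 j ^+ 2 = L ^+ 2 by rewrite -h; apply: eq_bigr => j _; rewrite expr2.
by rewrite sqrtr_sqr ger0_norm.
Qed.

Lemma mem_rowf (N : nat) (f : nat -> 'rV[R]_d) i : (i < N)%N ->
  (f i <= \matrix_(j < N) f j)%MS.
Proof. by move=> Hi; have := row_sub (Ordinal Hi) (\matrix_(j < N) f j); rewrite rowK. Qed.

Lemma subB_sub (m n : nat) (A B : 'M[R]_(m, d)) (C : 'M[R]_(n, d)) :
  (A <= C)%MS -> (B <= C)%MS -> (A - B <= C)%MS.
Proof. by move=> hA hB; rewrite addmx_sub // -scaleN1r scalemx_sub. Qed.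


Lemma split_edge (n : nat) (f : nat -> 'rV[R]_d) (a b c : R) e :
  0 < a -> 0 < b -> 0 < c -> a - b < c -> b - a < c -> c < a + b ->
  dot (f n) (f n) = c ^+ 2 -> dot e e = 1 -> dot e (f n) = 0 ->
  exists f' : nat -> 'rV[R]_d,
   [/\ forall i, (i < n)%N -> f' i = f i,
       dot (f' n) (f' n) = a ^+ 2, dot (f' n.+1) (f' n.+1) = b ^+ 2 &
       \sum_(i < n.+2) f' i = \sum_(i < n.+1) f i] /\
      [/\ (\matrix_(i < n.+1) f i <= \matrix_(i < n.+2) f' i)%MS,
       (e <= \matrix_(i < n.+2) f' i)%MS &
       forall j, (forall i, (i < n.+1)%N -> f i 0 j = 0) -> e 0 j = 0 ->
          forall i, (i < n.+2)%N -> f' i 0 j = 0].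
Proof.
move=> a0 b0 c0 h1 h2 h3 Hww Hee Hew.
set w := f n in Hww Hew *.
have Hwe : dot w e = 0 by rewrite dotC.
have cn0 : c != 0 by rewrite gt_eqF.
pose t := (a ^+ 2 - b ^+ 2 + c ^+ 2) / (2 * c ^+ 2).
pose s := a ^+ 2 - t ^+ 2 * c ^+ 2.
have spos : 0 < s.
  have -> : s = ((a+b+c)*(b-a+c)*(a-b+c)*(a+b-c)) / (4 * c ^+ 2).
    by rewrite /s /t; field.
  apply: divr_gt0; last by rewrite mulr_gt0 // exprn_gt0.
  by rewrite !mulr_gt0 // ?subr_gt0 //; lra.
pose h := Num.sqrt s.
have hpos : 0 < h by rewrite sqrtr_gt0.
have hh : h * h = s by rewrite -expr2 sqr_sqrtr // ltW.
have hn0 : h != 0 by rewrite gt_eqF.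
pose u := h *: e + t *: w.
pose f' := fun i => if (i < n)%N then f i else if i == n then u else w - u.
have f'n : f' n = u by rewrite /f' ltnn eqxx.
have f'n1 : f' n.+1 = w - u by rewrite /f' ltnNge leqnSn /= gtn_eqF.
have sumw : f' n + f' n.+1 = w by rewrite f'n f'n1 addrC subrK.
exists f'; split; split.
- by move=> i Hi; rewrite /f' Hi.
- rewrite f'n /u !dotDl !dotDr !dotZl !dotZr Hww Hee Hew Hwe.
  transitivity (t ^+ 2 * c ^+ 2 + h * h); first by ring.
  by rewrite hh /s; ring.
- rewrite f'n1 /u !dotBl !dotBr !dotDl !dotDr !dotZl !dotZr Hww Hee Hew Hwe.
  transitivity ((1 - t) ^+ 2 * c ^+ 2 + h * h); first by ring.
  by rewrite hh /s /t; field.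
- rewrite !big_ord_recr /= -addrA sumw; congr (_ + _).
  by apply: eq_bigr => i _; rewrite /f' ltn_ord.
- apply/row_subP => i; rewrite rowK.
  case: (ltnP i n) => Hi.
    have <- : f' i = f i by rewrite /f' Hi.
    by apply: mem_rowf; apply: (ltn_trans Hi); rewrite ltnS leqnSn.
  have -> : (i : nat) = n by apply/eqP; rewrite eqn_leq Hi -ltnS ltn_ord.
  by rewrite -/w -sumw addmx_sub // mem_rowf.
- have -> : e = h^-1 *: (f' n - t *: (f' n + f' n.+1)).
    by rewrite sumw f'n /u addrK scalerA mulVf // scale1r.
  by rewrite scalemx_sub // subB_sub ?scalemx_sub ?addmx_sub // mem_rowf.
- move=> j Hf He i Hi; rewrite /f'.
  have Hw : w 0 j = 0 by apply: Hf.
  case: (ltnP i n) => Hin; first by apply: Hf; apply: (ltn_trans Hin).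
  case: eqP => _; first by rewrite /u !mxE He Hw !mulr0 addr0.
  by rewrite /u !mxE He Hw; ring.
Qed.


Lemma orth_exists (k : nat) w : (2 <= k)%N -> (k <= d)%N ->
  (forall j : 'I_d, (k <= j)%N -> w 0 j = 0) ->
  exists e, [/\ dot e e = 1, dot e w = 0 & forall j : 'I_d, (k <= j)%N -> e 0 j = 0].
Proof.
move=> k2 kd Hw.
have d0 : (0 < d)%N by apply: leq_trans kd; apply: leq_trans k2.
have d1 : (1 < d)%N by apply: leq_trans kd.
pose j0 := Ordinal d0; pose j1 := Ordinal d1.
have ne0 : forall j : 'I_d, (k <= j)%N -> (j == j0) = false.
  move=> j Hj; apply/negbTE; apply/eqP => E; move: Hj; rewrite E /=.
  by move=> H; move: (leq_trans k2 H).
have ne1 : forall j : 'I_d, (k <= j)%N -> (j == j1) = false.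
  move=> j Hj; apply/negbTE; apply/eqP => E; move: Hj; rewrite E /=.
  by move=> H; move: (leq_trans k2 H).
have j10 : (j1 == j0) = false by [].
have j01 : (j0 == j1) = false by [].
case: (eqVneq (w 0 j0) 0) => H0.
  exists (delta_mx 0 j0); split.
  - by rewrite dot_delta mxE !eqxx.
  - by rewrite dot_delta.
  - by move=> j Hj; rewrite mxE ne0.
pose r := Num.sqrt (w 0 j0 ^+ 2 + w 0 j1 ^+ 2).
have rpos : 0 < r.
  rewrite sqrtr_gt0; apply: ltr_pwDl; last by rewrite sqr_ge0.
  by rewrite exprn_even_gt0 //= H0 orbT.
have rr : r ^+ 2 = w 0 j0 ^+ 2 + w 0 j1 ^+ 2 by rewrite sqr_sqrtr // addr_ge0 ?sqr_ge0.
have rn0 : r != 0 by rewrite gt_eqF.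
exists ((w 0 j0 / r) *: delta_mx 0 j1 - (w 0 j1 / r) *: delta_mx 0 j0); split.
- rewrite dotBl !dotZl !dot_delta !mxE !eqxx j10 j01 /=.
  transitivity ((w 0 j0 ^+ 2 + w 0 j1 ^+ 2) / r ^+ 2); first by field.
  by rewrite -rr divff // expf_neq0.
- by rewrite dotBl !dotZl !dot_delta; field.
- by move=> j Hj; rewrite !mxE ne0 ?ne1 //=; ring.
Qed.

Lemma exists_between (m : nat) (lo : nat -> R) (x u : R) : x < u ->
  (forall i, (i < m)%N -> lo i < u) ->
  exists c, [/\ x < c, c < u & forall i, (i < m)%N -> lo i < c].
Proof.
move=> xu; elim: m => [|m IH] H.
  by exists ((x + u) / 2); split => //; lra.
have [c [xc cu Hc]] : exists c, [/\ x < c, c < u & forall i, (i < m)%N -> lo i < c].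
  by apply: IH => i Hi; apply: H; apply: ltnW.
have lm : lo m < u by apply: H.
exists ((Num.max c (lo m) + u) / 2); split.
- have : c <= Num.max c (lo m) by rewrite le_max lexx.
  by move=> ?; lra.
- have : Num.max c (lo m) < u by rewrite gt_max cu lm.
  by move=> ?; lra.
- move=> i; rewrite ltnS leq_eqVlt => /orP [/eqP ->|Hi].
    have : lo m <= Num.max c (lo m) by rewrite le_max lexx orbT.
    have : Num.max c (lo m) < u by rewrite gt_max cu lm.
    by move=> ? ?; lra.
  have : c <= Num.max c (lo m) by rewrite le_max lexx.
  have : Num.max c (lo m) < u by rewrite gt_max cu lm.
  have := Hc i Hi.
  by move=> ? ? ?; lra.
Qed.


Definition intC (n : nat) (L : nat -> R) :=
  forall i, (i < n)%N -> 0 < L i /\ 2 * L i < \sum_(j < n) L j.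

Lemma merge m (L : nat -> R) : (2 <= m)%N -> intC m.+2 L ->
  exists c, [/\ L m - L m.+1 < c, L m.+1 - L m < c, c < L m + L m.+1 &
    intC m.+1 (fun i => if i == m then c else L i)].
Proof.
move=> m2 H.
set a := L m; set b := L m.+1; set S := \sum_(i < m) L i.
have HT : \sum_(j < m.+2) L j = S + a + b by rewrite !big_ord_recr.
have [a0 Ha] := H m (ltnW (ltnSn _)).
have [b0 Hb] := H m.+1 (ltnSn _).
rewrite HT in Ha Hb; rewrite -/a in a0 Ha; rewrite -/b in b0 Hb.
have Hi : forall i, (i < m)%N -> 0 < L i /\ 2 * L i < S + a + b.
  by move=> i Hi; rewrite -HT; apply: H; apply: (ltn_trans Hi); apply: (ltn_trans (ltnSn _)).
have LiS : forall i, (i < m)%N -> L i < S.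
  move=> i Hi2.
  pose i0 := Ordinal Hi2.
  have Hi' : ((if i == 0%N then 1 else 0) < m)%N by case: (i == 0%N) => //; apply: leq_trans m2.
  pose i1 := Ordinal Hi'.
  have ne : i1 != i0 by rewrite -val_eqE /=; case: (i =P 0%N) => [->|/eqP] //; rewrite eq_sym.
  rewrite /S (bigD1 i0) //= (bigD1 i1) //=.
  have : 0 <= \sum_(j < m | (j != i0) && (j != i1)) L j.
    by apply: sumr_ge0 => j _; apply: ltW; case: (Hi j (ltn_ord j)).
  have : 0 < L i1 by case: (Hi i1 (ltn_ord i1)).
  by move=> ? ?; lra.
have xu : Num.max (a - b) (b - a) < Num.min (a + b) S.
  by rewrite gt_max !lt_min; apply/andP; split; apply/andP; split; lra.
have hl : forall i, (i < m)%N -> 2 * L i - S < Num.min (a + b) S.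
  move=> i Hi0; have [? ?] := Hi i Hi0; have := LiS i Hi0; move=> ?.
  by rewrite lt_min; apply/andP; split; lra.
have [c [xc cu Hc]] := exists_between xu hl.
move: xc cu; rewrite gt_max lt_min => /andP [c1 c2] /andP [c3 c4].
exists c; split => //.
have HS : \sum_(j < m.+1) (if j == m :> nat then c else L j) = S + c.
  rewrite big_ord_recr /= eqxx; congr (_ + _).
  by apply: eq_bigr => j _; rewrite ltn_eqF.
move=> i Hi0; rewrite HS.
case: eqP => [_|Hne]; first by split; lra.
have Him : (i < m)%N by rewrite ltn_neqAle; apply/andP; split; [apply/eqP|rewrite -ltnS].
have [? ?] := Hi i Him; have := Hc i Him; move=> ?; split; lra.
Qed.


Definition inv (n k : nat) (L : nat -> R) (f : nat -> 'rV[R]_d) :=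
 [/\ forall i, (i < n)%N -> dot (f i) (f i) = L i ^+ 2,
     \sum_(i < n) f i = 0,
     forall i, (i < n)%N -> forall j : 'I_d, (k <= j)%N -> f i 0 j = 0 &
     forall j : 'I_d, (j < k)%N -> ((delta_mx 0 j : 'rV[R]_d) <= \matrix_(i < n) f i)%MS].

Lemma step_inv m (L : nat -> R) c f e k k0 :
  inv m.+1 k0 (fun i => if i == m then c else L i) f ->
  0 < L m -> 0 < L m.+1 ->
  L m - L m.+1 < c -> L m.+1 - L m < c -> c < L m + L m.+1 ->
  dot e e = 1 -> dot e (f m) = 0 -> (k0 <= k)%N ->
  (forall j : 'I_d, (k <= j)%N -> e 0 j = 0) ->
  (forall j : 'I_d, (k0 <= j)%N -> (j < k)%N -> delta_mx 0 j = e) ->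
  exists f', inv m.+2 k L f'.
Proof.
move=> [Hl Hs Hc Hsp] a0 b0 h1 h2 h3 Hee Hew kk0 He Hd.
have c0 : 0 < c by lra.
have Hww : dot (f m) (f m) = c ^+ 2 by rewrite Hl // eqxx.
have [f' [[S1 S2 S3 S4] [S5 S6 S7]]] := split_edge a0 b0 c0 h1 h2 h3 Hww Hee Hew.
exists f'; split.
- move=> i Hi; case: (ltnP i m) => Him.
    by rewrite S1 // Hl ?ltn_eqF // ltnW.
  move: Hi; rewrite ltnS leq_eqVlt => /orP [/eqP ->|]; first by [].
  rewrite ltnS => Hi; have -> : i = m by apply/eqP; rewrite eqn_leq Hi Him.
  by [].
- by rewrite S4.
- move=> i Hi j Hj; apply: S7 => //.
  + by move=> i' Hi'; apply: Hc => //; apply: leq_trans Hj.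
  + by apply: He.
- move=> j Hj; case: (ltnP j k0) => Hj0.
    by apply: submx_trans S5; apply: Hsp.
  by rewrite Hd.
Qed.

Lemma main m' : forall L, intC m'.+3 L -> forall k, (2 <= k)%N -> (k <= d)%N ->
  (k <= m'.+2)%N -> exists f, inv m'.+3 k L f.
Proof.
elim: m' => [|m' IH] L H k k2 kd km.
- have Ek : k = 2%N by apply/eqP; rewrite eqn_leq km k2.
  subst k.
  have d0 : (0 < d)%N by apply: leq_trans kd.
  have d1 : (1 < d)%N by [].
  pose j0 := Ordinal d0; pose j1 := Ordinal d1.
  have [l0 H0] := H 0%N isT; have [l1 H1] := H 1%N isT; have [l2 H2] := H 2%N isT.
  have HT : \sum_(j < 3) L j = L 0%N + L 1%N + L 2%N by rewrite !big_ord_recr big_ord0 /=; ring.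
  rewrite HT in H0 H1 H2.
  pose f0 := fun i : nat => if i == 0%N then L 0%N *: (delta_mx 0 j0 : 'rV[R]_d) else - (L 0%N *: (delta_mx 0 j0 : 'rV[R]_d)).
  have Hww : dot (f0 1%N) (f0 1%N) = L 0%N ^+ 2.
    by rewrite /f0 /= dotNl dotC dotNl opprK dotZl dotZr dot_delta mxE !eqxx mulr1 expr2.
  have Hee : dot (delta_mx 0 j1) (delta_mx 0 j1) = 1 by rewrite dot_delta mxE !eqxx.
  have Hew : dot (delta_mx 0 j1) (f0 1%N) = 0.
    have j10 : (j1 == j0) = false by [].
    by rewrite dot_delta /f0 /= !mxE j10 /= mulr0 oppr0.
  have [f' [[S1 S2 S3 S4] [S5 S6 S7]]] := split_edge (n := 1%N) l1 l2 l0
      ltac:(lra) ltac:(lra) ltac:(lra) Hww Hee Hew.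
  exists f'; split.
  + move=> i; case: i => [|[|[|i]]] // _.
    by rewrite S1 // /f0 /= dotZl dotZr dot_delta mxE !eqxx mulr1 expr2.
  + by rewrite S4 !big_ord_recr big_ord0 /= /f0 /= add0r subrr.
  + move=> i Hi j Hj.
    have jn0 : (j == j0) = false by apply/negbTE/eqP => E; move: Hj; rewrite E.
    have jn1 : (j == j1) = false by apply/negbTE/eqP => E; move: Hj; rewrite E.
    apply: S7 => //; last by rewrite mxE jn1 andbF.
    move=> i' _; rewrite /f0; case: (i' == 0%N); rewrite !mxE jn0 andbF /=.
      by rewrite mulr0.
    by rewrite mulr0 oppr0.
  + move=> [j Hj] /=; case: j Hj => [|[|j]] Hj // _.
    have -> : delta_mx 0 (Ordinal Hj) = (L 0%N)^-1 *: f0 0%N.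
      rewrite /f0 /= scalerA mulVf ?gt_eqF // scale1r; congr delta_mx; exact: ord_inj.
    by apply: scalemx_sub; apply: submx_trans S5; apply: mem_rowf.
- pose m := m'.+2.
  have m2 : (2 <= m)%N by [].
  have [c [h1 h2 h3 HL']] := merge m2 H.
  have [a0 _] := H m (ltnW (ltnSn _)).
  have [b0 _] := H m.+1 (ltnSn _).
  case: (leqP k m'.+2) => Hk.
  + have [f Hf] := IH _ HL' k k2 kd Hk.
    have [_ _ Hc _] := Hf.
    have [e [Hee Hew He]] := orth_exists (w := f m) k2 kd
      ltac:(by move=> j Hj; apply: Hc).
    exact: (step_inv Hf a0 b0 h1 h2 h3 Hee Hew (leqnn k) He
      ltac:(by move=> j Hj1 Hj2; move: (leq_ltn_trans Hj1 Hj2); rewrite ltnn)).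
  + have Ek : k = m'.+3 by apply/eqP; rewrite eqn_leq km Hk.
    subst k.
    have md : (m'.+2 < d)%N by [].
    have [f Hf] := IH _ HL' m'.+2 isT (ltnW md) (leqnn _).
    have [_ _ Hc _] := Hf.
    pose j0 := Ordinal md.
    have Hee : dot (delta_mx 0 j0) (delta_mx 0 j0) = 1 by rewrite dot_delta mxE !eqxx.
    have Hew : dot (delta_mx 0 j0) (f m) = 0 by rewrite dot_delta; apply: Hc.
    apply: (step_inv Hf a0 b0 h1 h2 h3 Hee Hew (leqnSn _)).
    * move=> j Hj; rewrite mxE.
      have -> : (j == j0) = false by apply/negbTE/eqP => E; move: Hj; rewrite E /= ltnn.
      by [].
    * move=> j Hj1 Hj2; congr delta_mx; apply: ord_inj => /=.
      by apply/eqP; rewrite eqn_leq Hj1 -ltnS Hj2.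
Qed.

End S.

Lemma vtx_sub (R : realType) (n d : nat) (P : 'M[R]_(n.-1, d)) i : (vtx P i <= P)%MS.
Proof.
rewrite /vtx; case: insubP => [k _ _|_]; last exact: sub0mx.
by case: eqP => _; [exact: sub0mx | exact: row_sub].
Qed.

Theorem proposition3p3 (R : realType) (n d : nat) (l : 'I_n -> R) :
  (3 <= n)%N -> (2 <= d)%N -> in_int_Cn l ->
  forall k : nat, (2 <= k)%N -> (k <= minn d n.-1)%N ->
  exists P : 'M[R]_(n.-1, d), in_Vd l P /\ poly_dim P = k.
Proof.
case: n l => [|[|[|m']]] // l Hn Hd Hl k k2.
rewrite leq_min => /andP [kd km].
pose L := fun i : nat => l (inord i).
have HsumL : \sum_(j < m'.+3) L j = \sum_(j < m'.+3) l j.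
  by apply: eq_bigr => j _; rewrite /L inord_val.
have HL : intC m'.+3 L.
  move=> i Hi; rewrite HsumL.
  have -> : L i = l (Ordinal Hi) by rewrite /L; congr l; apply: ord_inj; rewrite /= inordK.
  have [h1 h2] := Hl (Ordinal Hi).
  rewrite (bigD1 (Ordinal Hi)) //=; split => //; lra.
have [f [Hf1 Hf2 Hf3 Hf4]] := main HL k2 kd km.
pose g := fun i : nat => \sum_(j < i) f j.
pose P : 'M[R]_(m'.+2, d) := \matrix_(i < m'.+2) g i.+1.
have vtxE : forall i, (i <= m'.+3)%N -> vtx (n:=m'.+3) P i = g i.
  move=> i Hi; rewrite /vtx. case: insubP => [kk Hk Hkv|Hk].
    case: eqP => [->|Hi0]; first by rewrite /g big_ord0.
    have i0 : (0 < i)%N by rewrite lt0n; apply/eqP.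
    by rewrite rowK Hkv prednK.
  move: Hk; rewrite -ltnS; case: i Hi => [|i] //= Hi Hk.
  have -> : i.+1 = m'.+3 by apply/eqP; rewrite eqn_leq Hi leqNgt.
  by rewrite /g Hf2.
have Hdiff : forall i, (i < m'.+3)%N -> vtx (n:=m'.+3) P i.+1 - vtx (n:=m'.+3) P i = f i.
  move=> i Hi; rewrite (vtxE i.+1 Hi) (vtxE i (ltnW Hi)) /g.
  have -> : \sum_(j < i.+1) f j = \sum_(j < i) f j + f i by rewrite big_ord_recr.
  by rewrite addrC addKr.
exists P; split.
  move=> i; rewrite Hdiff //; apply: enorm_dot; first by apply: ltW; case: (Hl i).
  by rewrite Hf1 // /L inord_val.
rewrite /poly_dim; apply/eqP; rewrite eqn_leq; apply/andP; split.
  have <- : P *m (pid_mx k : 'M[R]_d) = P.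
    apply/matrixP => i j; rewrite !mxE (bigD1 j) //= big1 ?addr0.
      rewrite /pid_mx !mxE eqxx /=; case: (ltnP j k) => Hj; first by rewrite mulr1.
      rewrite mulr0 /g summxE big1 // => jj _; apply: Hf3 => //.
      have := ltn_ord jj; have := ltn_ord i; lia.
    move=> jj /negbTE hjj; rewrite /pid_mx !mxE.
    have -> : (jj == j :> nat) = false by rewrite val_eqE hjj.
    by rewrite mulr0.
  by apply: leq_trans (mxrankM_maxr _ _) _; rewrite rank_pid_mx.
have <- : \rank (pid_mx k : 'M[R]_(k, d)) = k by rewrite rank_pid_mx.
apply: mxrankS; apply/row_subP => i.
have -> : row i (pid_mx k : 'M[R]_(k, d)) = delta_mx 0 (widen_ord kd i).
  apply/rowP => j; rewrite /pid_mx !mxE ltn_ord andbT eqxx /= -val_eqE /= eq_sym.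
  by [].
apply: submx_trans (Hf4 (widen_ord kd i) (ltn_ord i)) _.
apply/row_subP => i'; rewrite rowK -Hdiff //.
by apply: subB_sub; apply: vtx_sub.
Qed.
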